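(* Let $S$ be the set of $27$ sextactic points of the Fermat cubic $F$ (see context), and let $\mathcal{L}$ be the set of lines in $\mathbb{P}^2_{\mathbb{C}}$ containing at least three points of $S$. These are exactly the lines occurring as components of reducible conics that contain six points of $S$. Then: <ul> <li>$|\mathcal{L}|=81$;</li> <li>each line of $\mathcal{L}$ contains exactly $3$ points of $S$;</li> <li>each point of $S$ lies on exactly $9$ lines of $\mathcal{L}$.</li> </ul> That is, $(\mathcal{L},S)$ is an $(81_3,27_9)$ configuration.
   Context: $F\subset\mathbb{P}^2_{\mathbb{C}}$ is the Fermat cubic $x^3+y^3+z^3=0$. The set of its sextactic points is $$S=\{[x:y:z]\in\mathbb{P}^2: x^3+y^3+z^3=0,\ (x^3-y^3)(y^3-z^3)(z^3-x^3)=0\}.$$ These are the $27$ points of $F$ at which the osculating conic has local contact order at least $6$ with $F$. *)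

(* Defs.v *)
From HB Require Import structures.
From mathcomp Require Import all_boot all_order all_algebra.
Set Implicit Arguments. Unset Strict Implicit. Unset Printing Implicit Defensive.
Import GRing.Theory.
Local Open Scope ring_scope.

(* A triple of coordinates; used both for points [x:y:z] of P^2 and for
   lines a x + b y + c z = 0 (dual coordinates [a:b:c]). *)
Definition triple (F : fieldType) := (F * F * F)%type.

(* Canonical representative of a point of P^2(F): the first nonzero
   coordinate equals 1.  This excludes the zero vector, and every point of
   P^2 has exactly one such representative. *)
Definition normalized (F : fieldType) (v : triple F) : Prop :=
  let: (x, y, z) := v in
  if x != 0 then x = 1 else if y != 0 then y = 1 else z = 1.

Definition on_line (F : fieldType) (l p : triple F) : Prop :=
  let: (a, b, c) := l in let: (x, y, z) := p in a * x + b * y + c * z = 0.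

Definition sextactic_eq (F : fieldType) (p : triple F) : Prop :=
  let: (x, y, z) := p in
  x ^+ 3 + y ^+ 3 + z ^+ 3 = 0 /\
  (x ^+ 3 - y ^+ 3) * (y ^+ 3 - z ^+ 3) * (z ^+ 3 - x ^+ 3) = 0.

Definition inS (F : fieldType) (p : triple F) : Prop :=
  normalized p /\ sextactic_eq p.

Definition inL (F : fieldType) (l : triple F) : Prop :=
  normalized l /\
  exists p q r : triple F,
    [/\ inS p, inS q & inS r] /\ [/\ on_line l p, on_line l q & on_line l r] /\
    [/\ p <> q, q <> r & p <> r].

Definition has_card (T : eqType) (P : T -> Prop) (n : nat) : Prop :=
  exists s : seq T, [/\ uniq s, size s = n & forall x, x \in s <-> P x].

(* Main.v *)
Require Import Defs.
From Stdlib Require Import ZArith.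
From mathcomp Require Import all_boot all_order all_algebra.
From mathcomp Require Import ssrZ ring.
Import ssrZ.Instances.
Set Implicit Arguments. Unset Strict Implicit. Unset Printing Implicit Defensive.
Import GRing.Theory.
Local Open Scope ring_scope.

Local Open Scope Z_scope.
Definition c3 := (Z * Z * Z)%type.
Definition code := (c3 * c3)%type.

Definition m3 (a c : c3) : c3 :=
  let: (a0,a1,a2) := a in let: (c0,c1,c2) := c in
  (Z.add (Z.mul a0 c0) (Z.mul 2 (Z.add (Z.mul a1 c2) (Z.mul a2 c1))),
   Z.add (Z.add (Z.mul a0 c1) (Z.mul a1 c0)) (Z.mul 2 (Z.mul a2 c2)),
   Z.add (Z.add (Z.mul a0 c2) (Z.mul a1 c1)) (Z.mul a2 c0)).
Definition ad3 (a c : c3) : c3 :=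
  let: (a0,a1,a2) := a in let: (c0,c1,c2) := c in (Z.add a0 c0, Z.add a1 c1, Z.add a2 c2).
Definition ng3 (a : c3) : c3 := let: (a0,a1,a2) := a in (Z.opp a0, Z.opp a1, Z.opp a2).

Definition cmul (x y : code) : code :=
  let: (A,B) := x in let: (C,D) := y in
  let BD := m3 B D in
  (ad3 (m3 A C) (ng3 BD), ad3 (ad3 (m3 A D) (m3 B C)) (ng3 BD)).
Definition cadd (x y : code) : code := let: (A,B) := x in let: (C,D) := y in (ad3 A C, ad3 B D).
Definition cneg (x : code) : code := let: (A,B) := x in (ng3 A, ng3 B).
Definition csub x y := cadd x (cneg y).
Definition z3 : c3 := (0,0,0).
Definition c0 : code := (z3, z3).
Definition cst (n : Z) : code := ((n,0,0), z3).
Definition c1 : code := cst 1.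
Definition cT : code := ((0,1,0), z3).
Definition cW : code := (z3, (1,0,0)).
Definition cW2 : code := ((-1),0,0, ((-1),0,0)).

Definition csubst (a b x : code) : code :=
  let: ((a0,a1,a2),(b0,b1,b2)) := x in
  let b2' := cmul b b in
  let P0 := cadd (cadd (cst a0) (cmul (cst a1) b)) (cmul (cst a2) b2') in
  let P1 := cadd (cadd (cst b0) (cmul (cst b1) b)) (cmul (cst b2) b2') in
  cadd P0 (cmul a P1).
Definition conjprod (x : code) : code :=
  let f a b := csubst a b x in
  cmul (f cW (cmul cW cT)) (cmul (f cW (cmul cW2 cT))
   (cmul (f cW2 cT) (cmul (f cW2 (cmul cW cT)) (f cW2 (cmul cW2 cT))))).
Definition nzc (x : code) : bool :=
  let: ((n,m1,m2),(m3',m4,m5)) := cmul x (conjprod x) in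
  [&& n != 0, m1 == 0, m2 == 0, m3' == 0, m4 == 0 & m5 == 0].

Local Close Scope Z_scope.
Local Open Scope ring_scope.
Definition zr (F : ringType) (z : Z) : F := (int_of_Z z)%:~R.
Lemma zrD (F : ringType) a b : zr F (Z.add a b) = zr F a + zr F b.
Proof. by rewrite /zr -rmorphD; congr (_ %:~R); exact: (rmorphD int_of_Z a b). Qed.
Lemma zrM (F : ringType) a b : zr F (Z.mul a b) = zr F a * zr F b.
Proof. by rewrite /zr -rmorphM; congr (_ %:~R); exact: (rmorphM int_of_Z a b). Qed.
Lemma zrN (F : ringType) a : zr F (Z.opp a) = - zr F a.
Proof. by rewrite /zr -rmorphN; congr (_ %:~R); exact: (rmorphN int_of_Z a). Qed.
Lemma zr0 (F : ringType) : zr F Z0 = 0. Proof. by []. Qed.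
Lemma zr1 (F : ringType) : zr F (Zpos xH) = 1. Proof. by []. Qed.
Lemma zr2 (F : ringType) : zr F (Zpos (xO xH)) = 2. Proof. by []. Qed.

Definition ev3 (F : ringType) (t : F) (a : c3) : F :=
  let: (a0,a1,a2) := a in zr F a0 + zr F a1 * t + zr F a2 * t ^+ 2.
Definition ev (F : ringType) (w t : F) (x : code) : F :=
  let: (A,B) := x in ev3 t A + w * ev3 t B.

Lemma ev3_m3 (F : comRingType) (t : F) a c : t ^+ 3 = 2 -> ev3 t (m3 a c) = ev3 t a * ev3 t c.
Proof.
move=> ht; case: a => [[a0 a1] a2]; case: c => [[b0 b1] b2].
cbv beta iota delta [m3 ev3].
rewrite !(zrD, zrM, zr2) -ht; ring.
Qed.

Lemma ev3_ad3 (F : comRingType) (t : F) a c : ev3 t (ad3 a c) = ev3 t a + ev3 t c.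
Proof.
case: a => [[a0 a1] a2]; case: c => [[b0 b1] b2].
cbv beta iota delta [ad3 ev3]; rewrite !zrD; ring.
Qed.
Lemma ev3_ng3 (F : comRingType) (t : F) a : ev3 t (ng3 a) = - ev3 t a.
Proof.
case: a => [[a0 a1] a2]; cbv beta iota delta [ng3 ev3]; rewrite !zrN; ring.
Qed.

Lemma ev_cmul (F : comRingType) (w t : F) x y : t ^+ 3 = 2 -> w ^+ 2 + w + 1 = 0 ->
  ev w t (cmul x y) = ev w t x * ev w t y.
Proof.
move=> ht hw; case: x => A B; case: y => C D.
cbv beta iota zeta delta [cmul ev].
rewrite !(ev3_ad3, ev3_ng3, ev3_m3) //.
have E : forall z : F, z = z - (w^+2+w+1) * (ev3 t B * ev3 t D) by move=> z; rewrite hw mul0r subr0.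
rewrite [RHS]E; ring.
Qed.

Lemma ev_cadd (F : comRingType) (w t : F) x y : ev w t (cadd x y) = ev w t x + ev w t y.
Proof.
case: x => A B; case: y => C D; cbv beta iota zeta delta [cadd ev].
rewrite !ev3_ad3; ring.
Qed.
Lemma ev_cneg (F : comRingType) (w t : F) x : ev w t (cneg x) = - ev w t x.
Proof.
case: x => A B; cbv beta iota zeta delta [cneg ev].
rewrite !ev3_ng3; ring.
Qed.
Lemma ev_csub (F : comRingType) (w t : F) x y : ev w t (csub x y) = ev w t x - ev w t y.
Proof. by rewrite /csub ev_cadd ev_cneg. Qed.
Lemma ev_cst (F : comRingType) (w t : F) n : ev w t (cst n) = zr F n.
Proof. rewrite /cst /ev /ev3 /z3 !zr0; ring. Qed.
Lemma ev_c0 (F : comRingType) (w t : F) : ev w t c0 = 0.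
Proof. rewrite /c0 /ev /ev3 /z3 !zr0; ring. Qed.
Lemma ev_c1 (F : comRingType) (w t : F) : ev w t c1 = 1.
Proof. by rewrite /c1 ev_cst zr1. Qed.
Lemma ev_cT (F : comRingType) (w t : F) : ev w t cT = t.
Proof. rewrite /cT /ev /ev3 /z3 !zr0 zr1; ring. Qed.
Lemma ev_cW (F : comRingType) (w t : F) : ev w t cW = w.
Proof. rewrite /cW /ev /ev3 /z3 !zr0 zr1; ring. Qed.
Lemma ev_cW2 (F : comRingType) (w t : F) : w ^+ 2 + w + 1 = 0 -> ev w t cW2 = w ^+ 2.
Proof.
move=> hw; rewrite /cW2 /ev /ev3 !zr0.
have -> : zr F (Zneg xH) = -1 by [].
have E : forall z : F, z = z - (w^+2+w+1) by move=> z; rewrite hw subr0.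
rewrite [RHS]E; ring.
Qed.

Lemma intr_nz (F : idomainType) (h : has_char0 F) (z : int) : z != 0 -> z%:~R != 0 :> F.
Proof.
case: z => n Hn.
  change (n%:R != 0 :> F); rewrite ((pcharf0P F).1 h); apply: contra Hn => /eqP ->; by [].
rewrite NegzE mulrNz oppr_eq0; change (n.+1%:R != 0 :> F); by rewrite ((pcharf0P F).1 h).
Qed.
Lemma zr_nz (F : idomainType) (h : has_char0 F) (z : Z) : z != Z0 -> zr F z != 0.
Proof.
move=> Hz; apply: intr_nz => //; apply: contra Hz => /eqP H.
by rewrite -(int_of_ZK z) H.
Qed.

Lemma nzcP (F : fieldType) (h : has_char0 F) (w t : F) x : t ^+ 3 = 2 -> w ^+ 2 + w + 1 = 0 ->
  nzc x -> ev w t x != 0.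
Proof.
move=> ht hw; rewrite /nzc.
case E: (cmul x (conjprod x)) => [[[n m1] m2] [[m3' m4] m5]].
move=> /and5P [Hn /eqP E1 /eqP E2 /eqP E3 /andP[/eqP E4 /eqP E5]]; subst.
have H1 : ev w t (cmul x (conjprod x)) = zr F n.
  rewrite E /ev /ev3 !zr0; ring.
apply: contraNneq (zr_nz h Hn) => Hx.
by rewrite -H1 ev_cmul // Hx mul0r.
Qed.

Definition crossF (F : fieldType) (u v : triple F) : triple F :=
  let: (a1,a2,a3) := u in let: (b1,b2,b3) := v in
  (a2 * b3 - a3 * b2, a3 * b1 - a1 * b3, a1 * b2 - a2 * b1).
Definition dotF (F : fieldType) (u v : triple F) : F :=
  let: (a1,a2,a3) := u in let: (b1,b2,b3) := v in a1 * b1 + a2 * b2 + a3 * b3.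
Definition scaleF (F : fieldType) (k : F) (u : triple F) : triple F :=
  let: (a1,a2,a3) := u in (k * a1, k * a2, k * a3).
Definition nk (F : fieldType) (u : triple F) : F :=
  let: (a1,a2,a3) := u in if a1 != 0 then a1^-1 else if a2 != 0 then a2^-1 else a3^-1.
Definition normF (F : fieldType) (u : triple F) := scaleF (nk u) u.
Definition z3F (F : fieldType) : triple F := (0,0,0).

Lemma on_lineE (F : fieldType) (l p : triple F) : on_line l p <-> dotF l p = 0.
Proof. by case: l => [[a b] c]; case: p => [[x y] z]. Qed.

Lemma nk_nz (F : fieldType) (u : triple F) : u <> z3F F -> nk u != 0.
Proof.
case: u => [[a b] c] /= H.
case: ifP => [|/negbFE/eqP a0]; first by rewrite invr_eq0.
case: ifP => [|/negbFE/eqP b0]; first by rewrite invr_eq0.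
rewrite invr_eq0; apply/eqP => c0; apply: H; by rewrite a0 b0 c0.
Qed.

Lemma normF_normalized (F : fieldType) (u : triple F) : u <> z3F F -> normalized (normF u).
Proof.
case: u => [[a b] c] H; rewrite /normF /=.
have [a0|a0] := eqVneq a 0 => /=.
  rewrite a0 mulr0 eqxx /=.
  have [b0|b0] := eqVneq b 0 => /=.
    rewrite b0 !mulr0 eqxx /=.
    have c0 : c != 0 by apply/eqP => c0; apply: H; rewrite a0 b0 c0.
    by rewrite mulVf.
  by rewrite mulVf // oner_neq0.
by rewrite mulVf // oner_neq0.
Qed.

Lemma cross_scale (F : fieldType) (k k' : F) u v :
  crossF (scaleF k u) (scaleF k' v) = scaleF (k * k') (crossF u v).
Proof.
case: u => [[a b] c]; case: v => [[x y] z] /=; congr (_,_,_); ring.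
Qed.
Lemma dot_scale (F : fieldType) (k : F) u v : dotF u (scaleF k v) = k * dotF u v.
Proof. case: u => [[a b] c]; case: v => [[x y] z] /=; ring. Qed.
Lemma dot_scalel (F : fieldType) (k : F) u v : dotF (scaleF k u) v = k * dotF u v.
Proof. case: u => [[a b] c]; case: v => [[x y] z] /=; ring. Qed.
Lemma cross_self (F : fieldType) (u : triple F) : crossF u u = z3F F.
Proof. case: u => [[a b] c] /=; congr (_,_,_); ring. Qed.
Lemma scale_z3 (F : fieldType) (k : F) : scaleF k (z3F F) = z3F F.
Proof. by rewrite /= !mulr0. Qed.
Lemma scale_inj (F : fieldType) (k : F) u v : k != 0 -> scaleF k u = scaleF k v -> u = v.
Proof.
move=> k0; case: u => [[a b] c]; case: v => [[x y] z] /= [] /(mulfI k0) -> /(mulfI k0) -> /(mulfI k0) -> //.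
Qed.
Lemma scale_z3_inv (F : fieldType) (k : F) u : k != 0 -> scaleF k u = z3F F -> u = z3F F.
Proof. move=> k0 H; apply: (scale_inj k0); by rewrite H scale_z3. Qed.

Lemma cross_dot (F : fieldType) (l p q : triple F) :
  dotF l p = 0 -> dotF l q = 0 -> crossF l (crossF p q) = z3F F.
Proof.
case: l => [[a b] c]; case: p => [[x y] z]; case: q => [[x' y'] z'] /= H1 H2.
congr (_,_,_).
- transitivity (x * (a * x' + b * y' + c * z') - x' * (a * x + b * y + c * z)); first ring.
  by rewrite H1 H2 !mulr0 subr0.
- transitivity (y * (a * x' + b * y' + c * z') - y' * (a * x + b * y + c * z)); first ring.
  by rewrite H1 H2 !mulr0 subr0.
- transitivity (z * (a * x' + b * y' + c * z') - z' * (a * x + b * y + c * z)); first ring.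
  by rewrite H1 H2 !mulr0 subr0.
Qed.

Lemma sub0E (F : fieldType) (u v : F) : u - v = 0 -> u = v.
Proof. by move/eqP; rewrite subr_eq0 => /eqP. Qed.

Lemma NP (F : fieldType) (u v : triple F) :
  normalized u -> normalized v -> crossF u v = z3F F -> u = v.
Proof.
case: u => [[a b] c]; case: v => [[x y] z] /= Nu Nv [/sub0E e1 /sub0E e2 /sub0E e3].
move: Nu; have [a0|a0] := eqVneq a 0 => /= Nu.
  subst a; move: Nu; have [b0|b0] := eqVneq b 0 => /= Nu.
    subst b c; rewrite mul0r mul1r in e1; rewrite mul1r mul0r in e2.
    move: Nv; rewrite e2 -e1 eqxx /= => ->; by [].
  subst b; rewrite mul0r mul1r in e3; rewrite mul1r in e1; subst x z.
  move: Nv; rewrite eqxx /=; have [y0|y0] := eqVneq y 0 => /= Nv.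
    by move: Nv; rewrite y0 mulr0 => /eqP; rewrite eq_sym oner_eq0.
  by subst y; rewrite mulr1.
subst a; rewrite mul1r in e2; rewrite mul1r in e3; subst y z.
move: Nv; have [x0|x0] := eqVneq x 0 => /= Nv.
  by move: Nv; rewrite x0 !mulr0 eqxx /= => /eqP; rewrite eq_sym oner_eq0.
by subst x; rewrite !mulr1.
Qed.

Lemma cross_scaler (F : fieldType) (k : F) u v : crossF u (scaleF k v) = scaleF k (crossF u v).
Proof. case: u => [[a b] c]; case: v => [[x y] z] /=; congr (_,_,_); ring. Qed.
Lemma scale1 (F : fieldType) (u : triple F) : scaleF 1 u = u.
Proof. by case: u => [[a b] c] /=; rewrite !mul1r. Qed.

Lemma normalized_nz (F : fieldType) (u : triple F) : normalized u -> u <> z3F F.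
Proof. case: u => [[a b] c] /= H [a0 b0 c0]; move: H; rewrite a0 b0 c0 eqxx /= => /eqP; by rewrite eq_sym oner_eq0. Qed.

Lemma G2 (F : fieldType) (l v : triple F) : normalized l -> crossF l v = z3F F -> v <> z3F F -> l = normF v.
Proof.
move=> Nl H Hv; apply: NP => //; first exact: normF_normalized.
by rewrite /normF cross_scaler H scale_z3.
Qed.
Lemma G3 (F : fieldType) (u v : triple F) : crossF u v = z3F F -> u <> z3F F -> v <> z3F F -> normF u = normF v.
Proof.
move=> H Hu Hv; apply: NP; try exact: normF_normalized.
by rewrite /normF cross_scale H scale_z3.
Qed.
Lemma G4 (F : fieldType) (u v : triple F) : normF u = normF v -> u <> z3F F -> v <> z3F F -> crossF u v = z3F F.
Proof.
move=> H Hu Hv; apply: (@scale_z3_inv _ (nk u * nk v)); first by rewrite mulf_neq0 // nk_nz.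
by rewrite -cross_scale -/(normF u) -/(normF v) H cross_self.
Qed.
Lemma dot_normF (F : fieldType) (v p : triple F) : dotF (normF v) p = nk v * dotF v p.
Proof. by rewrite /normF dot_scalel. Qed.

Definition code3 := (code * code * code)%type.
Definition evt (F : fieldType) (w t : F) (a : code3) : triple F :=
  let: (a1,a2,a3) := a in (ev w t a1, ev w t a2, ev w t a3).
Definition ccross (a b : code3) : code3 :=
  let: (a1,a2,a3) := a in let: (b1,b2,b3) := b in
  (csub (cmul a2 b3) (cmul a3 b2), csub (cmul a3 b1) (cmul a1 b3), csub (cmul a1 b2) (cmul a2 b1)).
Definition cdot (a b : code3) : code :=
  let: (a1,a2,a3) := a in let: (b1,b2,b3) := b in
  cadd (cadd (cmul a1 b1) (cmul a2 b2)) (cmul a3 b3).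
Definition isz (c : code) : bool := c == c0.
Definition nz3 (a : code3) : bool := let: (a1,a2,a3) := a in [|| nzc a1, nzc a2 | nzc a3].
Definition pt (F : fieldType) (w t : F) (a : code3) : triple F :=
  scaleF (ev w t a.1.1)^-1 (evt w t a).

Lemma evt_cross (F : fieldType) (w t : F) a b : t ^+ 3 = 2 -> w ^+ 2 + w + 1 = 0 ->
  evt w t (ccross a b) = crossF (evt w t a) (evt w t b).
Proof.
move=> ht hw; case: a => [[a1 a2] a3]; case: b => [[b1 b2] b3] /=.
by rewrite !(ev_csub, ev_cmul).
Qed.
Lemma ev_dot (F : fieldType) (w t : F) a b : t ^+ 3 = 2 -> w ^+ 2 + w + 1 = 0 ->
  ev w t (cdot a b) = dotF (evt w t a) (evt w t b).
Proof.
move=> ht hw; case: a => [[a1 a2] a3]; case: b => [[b1 b2] b3] /=.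
by rewrite !(ev_cadd, ev_cmul).
Qed.
Lemma iszP (F : fieldType) (w t : F) c : isz c -> ev w t c = 0.
Proof. by move/eqP ->; rewrite ev_c0. Qed.
Lemma nz3P (F : fieldType) (h : has_char0 F) (w t : F) a : t ^+ 3 = 2 -> w ^+ 2 + w + 1 = 0 ->
  nz3 a -> evt w t a <> z3F F.
Proof.
move=> ht hw; case: a => [[a1 a2] a3] /= /or3P [] /(nzcP h ht hw) H [] E1 E2 E3; by move: H; rewrite ?E1 ?E2 ?E3 eqxx.
Qed.

Local Open Scope Z_scope.
Definition PL : seq code3 := [::
  (((0,1,0),(0,(-1),0)), ((0,(-1),0),(0,1,0)), ((0,0,0),(0,0,0)));
  (((0,(-1),0),(0,1,0)), ((0,0,0),(0,0,0)), (((-1),0,0),(1,0,0)));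
  (((0,0,0),(0,0,0)), ((0,(-1),0),(0,1,0)), (((-1),0,0),(1,0,0)));
  (((1,0,0),(0,0,(-1))), (((-1),(-1),0),(0,0,0)), (((-1),0,0),(0,(-1),0)));
  (((1,0,1),(0,0,1)), (((-1),(-1),0),(0,0,0)), (((-1),1,0),(0,1,0)));
  (((0,0,(-1)),(1,0,0)), ((0,(-1),0),((-1),0,0)), (((-1),(-1),0),(0,0,0)));
  (((0,0,0),(1,0,(-1))), ((0,(-1),0),((-1),0,0)), (((-1),0,0),(0,(-1),0)));
  ((((-1),0,(-1)),((-1),0,0)), ((1,(-1),0),(1,0,0)), (((-1),(-1),0),(0,0,0)));
  ((((-1),0,1),((-1),0,1)), ((1,(-1),0),(1,0,0)), (((-1),1,0),(0,1,0)));
  (((0,(-1),0),(0,(-2),0)), ((0,0,0),(0,0,0)), (((-1),0,0),(1,0,0)));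
  (((0,0,0),(0,0,0)), ((0,(-1),0),(0,(-2),0)), (((-1),0,0),(1,0,0)));
  (((1,0,0),(0,0,(-1))), (((-1),0,0),(0,(-1),0)), (((-1),(-1),0),(0,0,0)));
  (((1,0,(-1)),(0,0,0)), (((-1),0,0),(0,(-1),0)), (((-1),1,0),(0,1,0)));
  (((0,0,1),(1,0,1)), ((0,0,0),((-1),(-1),0)), (((-1),0,0),(0,(-1),0)));
  (((0,0,(-1)),(1,0,0)), ((0,0,0),((-1),(-1),0)), (((-1),1,0),(0,1,0)));
  ((((-1),0,0),((-1),0,(-1))), ((1,0,0),(1,(-1),0)), (((-1),(-1),0),(0,0,0)));
  ((((-1),0,1),((-1),0,1)), ((1,0,0),(1,(-1),0)), (((-1),0,0),(0,(-1),0)));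
  (((0,0,0),(0,0,0)), ((0,2,0),(0,1,0)), (((-1),0,0),(1,0,0)));
  (((0,2,0),(0,1,0)), ((0,0,0),(0,0,0)), (((-1),0,0),(1,0,0)));
  (((1,0,1),(0,0,1)), (((-1),1,0),(0,1,0)), (((-1),(-1),0),(0,0,0)));
  (((1,0,(-1)),(0,0,0)), (((-1),1,0),(0,1,0)), (((-1),0,0),(0,(-1),0)));
  (((0,0,1),(1,0,1)), ((0,1,0),((-1),1,0)), (((-1),(-1),0),(0,0,0)));
  (((0,0,0),(1,0,(-1))), ((0,1,0),((-1),1,0)), (((-1),1,0),(0,1,0)));
  ((((-1),0,(-1)),((-1),0,0)), ((1,1,0),(1,1,0)), (((-1),0,0),(0,(-1),0)));
  ((((-1),0,0),((-1),0,(-1))), ((1,1,0),(1,1,0)), (((-1),1,0),(0,1,0)));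
  (((0,1,0),(0,2,0)), ((0,(-1),0),(0,1,0)), ((0,0,0),(0,0,0)));
  (((0,0,(-1)),(1,0,0)), (((-1),(-1),0),(0,0,0)), ((0,(-1),0),((-1),0,0)));
  (((0,0,1),(1,0,1)), (((-1),(-1),0),(0,0,0)), ((0,1,0),((-1),1,0)));
  ((((-1),0,0),((-1),0,(-1))), ((0,(-1),0),((-1),0,0)), ((0,0,0),((-1),(-1),0)));
  ((((-1),0,1),((-1),0,1)), ((0,(-1),0),((-1),0,0)), ((0,1,0),((-1),1,0)));
  (((1,0,(-1)),(0,0,0)), ((1,(-1),0),(1,0,0)), ((0,(-1),0),((-1),0,0)));
  (((1,0,0),(0,0,(-1))), ((1,(-1),0),(1,0,0)), ((0,0,0),((-1),(-1),0)));
  (((0,0,0),(1,0,(-1))), (((-1),0,0),(0,(-1),0)), ((0,(-1),0),((-1),0,0)));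
  (((0,0,1),(1,0,1)), (((-1),0,0),(0,(-1),0)), ((0,0,0),((-1),(-1),0)));
  ((((-1),0,0),((-1),0,(-1))), ((0,0,0),((-1),(-1),0)), ((0,(-1),0),((-1),0,0)));
  ((((-1),0,(-1)),((-1),0,0)), ((0,0,0),((-1),(-1),0)), ((0,1,0),((-1),1,0)));
  (((1,0,1),(0,0,1)), ((1,0,0),(1,(-1),0)), ((0,0,0),((-1),(-1),0)));
  (((1,0,(-1)),(0,0,0)), ((1,0,0),(1,(-1),0)), ((0,1,0),((-1),1,0)));
  (((0,0,(-1)),(1,0,0)), (((-1),1,0),(0,1,0)), ((0,0,0),((-1),(-1),0)));
  (((0,0,0),(1,0,(-1))), (((-1),1,0),(0,1,0)), ((0,1,0),((-1),1,0)));
  ((((-1),0,1),((-1),0,1)), ((0,1,0),((-1),1,0)), ((0,(-1),0),((-1),0,0)));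
  ((((-1),0,(-1)),((-1),0,0)), ((0,1,0),((-1),1,0)), ((0,0,0),((-1),(-1),0)));
  (((1,0,1),(0,0,1)), ((1,1,0),(1,1,0)), ((0,(-1),0),((-1),0,0)));
  (((1,0,0),(0,0,(-1))), ((1,1,0),(1,1,0)), ((0,1,0),((-1),1,0)));
  (((0,(-2),0),(0,(-1),0)), ((0,(-1),0),(0,1,0)), ((0,0,0),(0,0,0)));
  ((((-1),0,(-1)),((-1),0,0)), (((-1),(-1),0),(0,0,0)), ((1,(-1),0),(1,0,0)));
  ((((-1),0,0),((-1),0,(-1))), (((-1),(-1),0),(0,0,0)), ((1,0,0),(1,(-1),0)));
  (((1,0,(-1)),(0,0,0)), ((0,(-1),0),((-1),0,0)), ((1,(-1),0),(1,0,0)));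
  (((1,0,1),(0,0,1)), ((0,(-1),0),((-1),0,0)), ((1,1,0),(1,1,0)));
  (((0,0,0),(1,0,(-1))), ((1,(-1),0),(1,0,0)), ((1,0,0),(1,(-1),0)));
  (((0,0,1),(1,0,1)), ((1,(-1),0),(1,0,0)), ((1,1,0),(1,1,0)));
  ((((-1),0,1),((-1),0,1)), (((-1),0,0),(0,(-1),0)), ((1,0,0),(1,(-1),0)));
  ((((-1),0,(-1)),((-1),0,0)), (((-1),0,0),(0,(-1),0)), ((1,1,0),(1,1,0)));
  (((1,0,0),(0,0,(-1))), ((0,0,0),((-1),(-1),0)), ((1,(-1),0),(1,0,0)));
  (((1,0,1),(0,0,1)), ((0,0,0),((-1),(-1),0)), ((1,0,0),(1,(-1),0)));
  (((0,0,0),(1,0,(-1))), ((1,0,0),(1,(-1),0)), ((1,(-1),0),(1,0,0)));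
  (((0,0,(-1)),(1,0,0)), ((1,0,0),(1,(-1),0)), ((1,1,0),(1,1,0)));
  ((((-1),0,1),((-1),0,1)), (((-1),1,0),(0,1,0)), ((1,(-1),0),(1,0,0)));
  ((((-1),0,0),((-1),0,(-1))), (((-1),1,0),(0,1,0)), ((1,1,0),(1,1,0)));
  (((1,0,(-1)),(0,0,0)), ((0,1,0),((-1),1,0)), ((1,0,0),(1,(-1),0)));
  (((1,0,0),(0,0,(-1))), ((0,1,0),((-1),1,0)), ((1,1,0),(1,1,0)));
  (((0,0,1),(1,0,1)), ((1,1,0),(1,1,0)), ((1,(-1),0),(1,0,0)));
  (((0,0,(-1)),(1,0,0)), ((1,1,0),(1,1,0)), ((1,0,0),(1,(-1),0)));
  (((0,(-1),0),(0,1,0)), ((0,0,0),(0,0,0)), ((0,1,0),(0,(-1),0)));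
  (((0,1,0),(0,(-1),0)), ((1,0,0),((-1),0,0)), ((0,0,0),(0,0,0)));
  (((0,0,0),(0,0,0)), ((1,0,0),((-1),0,0)), ((0,1,0),(0,(-1),0)));
  (((0,1,0),(0,2,0)), ((1,0,0),((-1),0,0)), ((0,0,0),(0,0,0)));
  (((0,0,0),(0,0,0)), ((1,0,0),((-1),0,0)), ((0,1,0),(0,2,0)));
  (((0,0,0),(0,0,0)), ((1,0,0),((-1),0,0)), ((0,(-2),0),(0,(-1),0)));
  (((0,(-2),0),(0,(-1),0)), ((1,0,0),((-1),0,0)), ((0,0,0),(0,0,0)));
  (((0,(-1),0),(0,(-2),0)), ((0,0,0),(0,0,0)), ((0,1,0),(0,(-1),0)));
  (((0,2,0),(0,1,0)), ((0,0,0),(0,0,0)), ((0,1,0),(0,(-1),0)));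
  ((((-1),0,0),(1,0,0)), ((0,(-1),0),(0,1,0)), ((0,0,0),(0,0,0)));
  (((1,0,0),((-1),0,0)), ((0,0,0),(0,0,0)), ((0,1,0),(0,(-1),0)));
  (((0,0,0),(0,0,0)), ((0,(-1),0),(0,1,0)), ((0,1,0),(0,(-1),0)));
  (((1,0,0),(2,0,0)), ((0,0,0),(0,0,0)), ((0,1,0),(0,(-1),0)));
  (((0,0,0),(0,0,0)), ((0,(-1),0),(0,(-2),0)), ((0,1,0),(0,(-1),0)));
  (((0,0,0),(0,0,0)), ((0,2,0),(0,1,0)), ((0,1,0),(0,(-1),0)));
  ((((-2),0,0),((-1),0,0)), ((0,0,0),(0,0,0)), ((0,1,0),(0,(-1),0)));
  ((((-1),0,0),((-2),0,0)), ((0,(-1),0),(0,1,0)), ((0,0,0),(0,0,0)));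
  (((2,0,0),(1,0,0)), ((0,(-1),0),(0,1,0)), ((0,0,0),(0,0,0)))].
Definition U : seq code := [:: c1; cW; cW2].
Definition PS : seq code3 :=
  [seq (c1, u, cneg (cmul cT v)) | u <- U, v <- U] ++
  [seq (c1, cneg (cmul cT v), u) | u <- U, v <- U] ++
  [seq (cT, cneg u, cneg v) | u <- U, v <- U].
Local Close Scope Z_scope.
Definition ccube x := cmul x (cmul x x).
Definition isz3 (x : code3) : bool := let: (x1,x2,x3) := x in [&& isz x1, isz x2 & isz x3].
Definition chkS_pt (a : code3) : bool := let: (x,y,z) := a in
  [&& nzc x, isz (cadd (cadd (ccube x) (ccube y)) (ccube z)) &
      isz (cmul (cmul (csub (ccube x) (ccube y)) (csub (ccube y) (ccube z))) (csub (ccube z) (ccube x)))].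
Definition sep_pt (s : seq code3) (a : code3) : bool := all (fun b => (a == b) || nz3 (ccross a b)) s.
Definition dec_pt (m : code3) : bool := all (fun a => isz (cdot m a) || nzc (cdot m a)) PS.
Definition cnt3_pt (m : code3) : bool := (size (filter (fun a => isz (cdot m a)) PS) == 3)%N.
Definition cnt9_pt (a : code3) : bool := (size (filter (fun m => isz (cdot m a)) PL) == 9)%N.
Definition tri_pt (a b c : code3) : bool := [|| a == b, b == c, a == c |
   (if isz (cdot (ccross a b) c) then has (fun m => isz3 (ccross m (ccross a b))) PL else nzc (cdot (ccross a b) c))].
Definition tri_ab (a b : code3) : bool := all (tri_pt a b) PS.
Definition tri_a (a : code3) : bool := all (tri_ab a) PS.

Lemma chk_S_ok : all chkS_pt PS. Proof. by vm_compute. Qed.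
Lemma chk_PS_sep : all (sep_pt PS) PS. Proof. by vm_compute. Qed.
Lemma chk_PS_uniq : uniq PS. Proof. by vm_compute. Qed.
Lemma chk_PL_sep : all (sep_pt PL) PL. Proof. by vm_compute. Qed.
Lemma chk_PL_uniq : uniq PL. Proof. by vm_compute. Qed.
Lemma chk_PL_nz : all nz3 PL. Proof. by vm_compute. Qed.
Lemma chk_PL_size : size PL = 81%N. Proof. by vm_compute. Qed.
Lemma chk_dec_ok : all dec_pt PL. Proof. by vm_compute. Qed.
Lemma chk_cnt3_ok : all cnt3_pt PL. Proof. by vm_compute. Qed.
Lemma chk_cnt9_ok : all cnt9_pt PS. Proof. by vm_compute. Qed.
Lemma chk_tri_ok : all tri_a PS. Proof. by vm_compute. Qed.

Lemma ev_ccube (F : fieldType) (w t : F) x : t ^+ 3 = 2 -> w ^+ 2 + w + 1 = 0 ->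
  ev w t (ccube x) = ev w t x ^+ 3.
Proof. by move=> ht hw; rewrite /ccube !ev_cmul // !exprS expr0 mulr1. Qed.

Lemma sext_scale (F : fieldType) (k : F) v : sextactic_eq v -> sextactic_eq (scaleF k v).
Proof.
case: v => [[x y] z] /= [H1 H2]; split.
  transitivity (k ^+ 3 * (x ^+ 3 + y ^+ 3 + z ^+ 3)); first ring.
  by rewrite H1 mulr0.
transitivity ((k ^+ 3) ^+ 3 * ((x ^+ 3 - y ^+ 3) * (y ^+ 3 - z ^+ 3) * (z ^+ 3 - x ^+ 3))); first ring.
by rewrite H2 mulr0.
Qed.

Lemma inS_pt (F : fieldType) (h : has_char0 F) (w t : F) a : t ^+ 3 = 2 -> w ^+ 2 + w + 1 = 0 ->
  a \in PS -> inS (pt w t a).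
Proof.
move=> ht hw aPS; have := allP chk_S_ok a aPS.
case: a aPS => [[x y] z] _ /and3P [Hx H1 H2].
have Hx' := nzcP h ht hw Hx.
split.
  by rewrite /pt /= mulVf // oner_neq0.
apply: sext_scale => /=; split.
  by move: (iszP w t H1); rewrite !(ev_cadd, ev_ccube).
by move: (iszP w t H2); rewrite !(ev_cmul, ev_csub, ev_ccube).
Qed.

Lemma roots3 (F : fieldType) (w t : F) (hw : w ^+ 2 + w + 1 = 0) (X a : F) :
  X ^+ 3 = a ^+ 3 -> exists2 u, u \in U & X = a * ev w t u.
Proof.
move=> H.
have E : (X - a) * (X - a * w) * (X - a * w ^+ 2) = X ^+ 3 - a ^+ 3 +
   (w ^+ 2 + w + 1) * (- X ^+ 2 * a + X * a ^+ 2 * w - a ^+ 3 * (w - 1)) by ring.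
rewrite H hw subrr mul0r addr0 in E.
move/eqP: E; rewrite !mulf_eq0 !subr_eq0 => /orP [/orP [] | ] /eqP E.
- by exists c1; [rewrite inE eqxx | rewrite ev_c1 mulr1].
- by exists cW; [rewrite !inE eqxx orbT | rewrite ev_cW].
- by exists cW2; [rewrite !inE eqxx !orbT | rewrite ev_cW2].
Qed.

Lemma two_nz (F : fieldType) (h : has_char0 F) : (2 : F) != 0.
Proof. by rewrite ((pcharf0P F).1 h 2). Qed.

Lemma inS_desc (F : fieldType) (h : has_char0 F) (w t : F) : t ^+ 3 = 2 -> w ^+ 2 + w + 1 = 0 ->
  forall p, inS p -> exists2 a, a \in PS & p = pt w t a.
Proof.
move=> ht hw [[x y] z] [N [E1 E2]].
have two0 := two_nz h.
have t0 : t != 0.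
  apply/eqP => t0; move: ht; rewrite t0 expr0n /= => /eqP; by rewrite eq_sym (negbTE two0).
have x0 : x != 0.
  apply/eqP => x0; subst x.
  have Hy3 : y ^+ 3 = - z ^+ 3.
    by move: E1; rewrite expr0n add0r => /eqP; rewrite addr_eq0 => /eqP.
  have Hz : z = 0.
    have : 2 * (z ^+ 3) ^+ 3 = 0.
      transitivity (- ((0 ^+ 3 - y ^+ 3) * (y ^+ 3 - z ^+ 3) * (z ^+ 3 - 0 ^+ 3))).
        rewrite Hy3 expr0n /=; ring.
      by rewrite E2 oppr0.
    by move/eqP; rewrite mulf_eq0 (negbTE two0) /= !expf_eq0 /= => /eqP.
  have Hy : y = 0.
    have : y ^+ 3 == 0 by rewrite Hy3 Hz expr0n /= oppr0.
    by rewrite expf_eq0 => /eqP.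
  by move: N; rewrite /= Hy Hz eqxx /= => /eqP; rewrite eq_sym oner_eq0.
have x1 : x = 1 by move: N => /=; rewrite x0.
subst x; rewrite expr1n in E1 E2.
have mt3 : (- t) ^+ 3 = - 2 by rewrite -ht; ring.
move/eqP: E2; rewrite !mulf_eq0 !subr_eq0 => /orP [/orP [] | ] /eqP E.
- have Hz3 : z ^+ 3 = (- t) ^+ 3.
    rewrite mt3; transitivity ((1 + y ^+ 3 + z ^+ 3) - 1 - y ^+ 3); first ring.
    rewrite E1 -E; ring.
  have [u uU yu] : exists2 u, u \in U & y = 1 * ev w t u by apply: (roots3 t hw); rewrite expr1n E.
  have [v vU zv] := roots3 t hw Hz3.
  exists (c1, u, cneg (cmul cT v)).
    by rewrite mem_cat; apply/orP; left; exact: (allpairs_f (fun u v => (c1, u, cneg (cmul cT v))) uU vU).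
  cbn [pt evt scaleF fst snd]; rewrite ev_c1 invr1 !mul1r ev_cneg ev_cmul // ev_cT yu zv mul1r.
  congr (_,_,_); ring.
- have E1' : 1 + y ^+ 3 + y ^+ 3 = 0 by rewrite {2}E.
  have H2 : 2 * y ^+ 3 = - 1.
    transitivity ((1 + y ^+ 3 + y ^+ 3) - 1); first ring.
    by rewrite E1' sub0r.
  have Hy3 : (t * y) ^+ 3 = (- 1) ^+ 3.
    transitivity (t ^+ 3 * y ^+ 3); first ring.
    rewrite ht H2; ring.
  have Hz3 : (t * z) ^+ 3 = (- 1) ^+ 3.
    transitivity (t ^+ 3 * z ^+ 3); first ring.
    rewrite ht -E H2; ring.
  have [u uU yu] := roots3 t hw Hy3.
  have [v vU zv] := roots3 t hw Hz3.
  exists (cT, cneg u, cneg v).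
    by rewrite mem_cat; apply/orP; right; rewrite mem_cat; apply/orP; right; exact: (allpairs_f (fun u v => (cT, cneg u, cneg v)) uU vU).
  cbn [pt evt scaleF fst snd]; rewrite ev_cT !ev_cneg.
  have -> : y = t^-1 * (t * y) by rewrite mulKf.
  have -> : z = t^-1 * (t * z) by rewrite mulKf.
  rewrite yu zv mulVf //.
  congr (_,_,_); ring.
- have Hy3 : y ^+ 3 = (- t) ^+ 3.
    rewrite mt3; transitivity ((1 + y ^+ 3 + z ^+ 3) - 1 - z ^+ 3); first ring.
    rewrite E1 E; ring.
  have [u uU zu] : exists2 u, u \in U & z = 1 * ev w t u by apply: (roots3 t hw); rewrite expr1n E.
  have [v vU yv] := roots3 t hw Hy3.
  exists (c1, cneg (cmul cT v), u).
    by rewrite mem_cat; apply/orP; right; rewrite mem_cat; apply/orP; left; exact: (allpairs_f (fun u v => (c1, cneg (cmul cT v), u)) uU vU).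
  cbn [pt evt scaleF fst snd]; rewrite ev_c1 invr1 !mul1r ev_cneg ev_cmul // ev_cT zu yv mul1r.
  congr (_,_,_); ring.
Qed.

Lemma scale_scale (F : fieldType) (k k' : F) v : scaleF k (scaleF k' v) = scaleF (k * k') v.
Proof. case: v => [[a b] c] /=; congr (_,_,_); ring. Qed.

Lemma PS_nz (F : fieldType) (h : has_char0 F) (w t : F) a : t ^+ 3 = 2 -> w ^+ 2 + w + 1 = 0 ->
  a \in PS -> ev w t a.1.1 != 0.
Proof.
move=> ht hw aPS; have := allP chk_S_ok a aPS.
case: a aPS => [[x y] z] _ /and3P [Hx _ _] /=; exact: (nzcP h ht hw Hx).
Qed.

Lemma evt_pt (F : fieldType) (h : has_char0 F) (w t : F) a : t ^+ 3 = 2 -> w ^+ 2 + w + 1 = 0 ->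
  a \in PS -> evt w t a = scaleF (ev w t a.1.1) (pt w t a).
Proof.
move=> ht hw aPS; rewrite /pt scale_scale mulfV ?scale1 //; exact: PS_nz.
Qed.

Lemma sepP (F : fieldType) (h : has_char0 F) (w t : F) s a b : t ^+ 3 = 2 -> w ^+ 2 + w + 1 = 0 ->
  all (sep_pt s) s -> a \in s -> b \in s -> a <> b -> crossF (evt w t a) (evt w t b) <> z3F F.
Proof.
move=> ht hw H aS bS ab; have := allP (allP H a aS) b bS.
rewrite (introF eqP ab) /= => Hn; rewrite -evt_cross //; exact: nz3P.
Qed.

Lemma pt_inj (F : fieldType) (h : has_char0 F) (w t : F) a b : t ^+ 3 = 2 -> w ^+ 2 + w + 1 = 0 ->
  a \in PS -> b \in PS -> pt w t a = pt w t b -> a = b.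
Proof.
move=> ht hw aS bS E; apply/eqP/negP => /negP/eqP ab.
apply: (sepP h ht hw chk_PS_sep aS bS ab).
by rewrite (evt_pt h ht hw aS) (evt_pt h ht hw bS) E cross_scale cross_self scale_z3.
Qed.

Lemma PL_nz (F : fieldType) (h : has_char0 F) (w t : F) m : t ^+ 3 = 2 -> w ^+ 2 + w + 1 = 0 ->
  m \in PL -> evt w t m <> z3F F.
Proof. move=> ht hw mL; apply: nz3P => //; exact: (allP chk_PL_nz). Qed.

Lemma nL_inj (F : fieldType) (h : has_char0 F) (w t : F) m m' : t ^+ 3 = 2 -> w ^+ 2 + w + 1 = 0 ->
  m \in PL -> m' \in PL -> normF (evt w t m) = normF (evt w t m') -> m = m'.
Proof.
move=> ht hw mS mS' E; apply/eqP/negP => /negP/eqP ab.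
apply: (sepP h ht hw chk_PL_sep mS mS' ab).
by apply: G4 => //; apply: (PL_nz h ht hw).
Qed.

Lemma on_pt (F : fieldType) (h : has_char0 F) (w t : F) l a : t ^+ 3 = 2 -> w ^+ 2 + w + 1 = 0 ->
  a \in PS -> on_line l (pt w t a) <-> dotF l (evt w t a) = 0.
Proof.
move=> ht hw aS; rewrite on_lineE /pt dot_scale; split.
  by move/eqP; rewrite mulf_eq0 invr_eq0 (negbTE (PS_nz h ht hw aS)) /= => /eqP.
by move=> ->; rewrite mulr0.
Qed.

Lemma decP (F : fieldType) (h : has_char0 F) (w t : F) m a : t ^+ 3 = 2 -> w ^+ 2 + w + 1 = 0 ->
  m \in PL -> a \in PS -> dotF (evt w t m) (evt w t a) = 0 <-> isz (cdot m a).
Proof.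
move=> ht hw mL aS; rewrite -ev_dot //; split; last exact: iszP.
have := allP (allP chk_dec_ok m mL) a aS; case/orP => // /(nzcP h ht hw) H E.
by move: H; rewrite E eqxx.
Qed.

Lemma on_nL (F : fieldType) (h : has_char0 F) (w t : F) m a : t ^+ 3 = 2 -> w ^+ 2 + w + 1 = 0 ->
  m \in PL -> a \in PS -> on_line (normF (evt w t m)) (pt w t a) <-> isz (cdot m a).
Proof.
move=> ht hw mL aS; rewrite on_pt // dot_normF -(decP h ht hw mL aS); split; last by move=> ->; rewrite mulr0.
by move/eqP; rewrite mulf_eq0 (negbTE (nk_nz (PL_nz h ht hw mL))) /= => /eqP.
Qed.

Definition LL (F : fieldType) (w t : F) := map (fun m => normF (evt w t m)) PL.

Lemma isz3P (F : fieldType) (w t : F) x : isz3 x -> evt w t x = z3F F.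
Proof. case: x => [[x1 x2] x3]; rewrite /evt; move=> /and3P [/(iszP w t) -> /(iszP w t) -> /(iszP w t) ->] //. Qed.

Lemma inL_LL (F : fieldType) (h : has_char0 F) (w t : F) l : t ^+ 3 = 2 -> w ^+ 2 + w + 1 = 0 ->
  inL l -> l \in LL w t.
Proof.
move=> ht hw [Nl [p [q [r [[Sp Sq Sr] [[Lp Lq Lr] [pq qr pr]]]]]]].
have [a aS pa] := inS_desc h ht hw Sp.
have [b bS qb] := inS_desc h ht hw Sq.
have [c cS rc] := inS_desc h ht hw Sr.
subst p q r.
have ab : a != b by apply/eqP => E; apply: pq; rewrite E.
have bc : b != c by apply/eqP => E; apply: qr; rewrite E.
have ac : a != c by apply/eqP => E; apply: pr; rewrite E.
have := allP (allP (allP chk_tri_ok a aS) b bS) c cS.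
rewrite /tri_pt (negbTE ab) (negbTE bc) (negbTE ac) !orFb.
have D0 : crossF (evt w t a) (evt w t b) <> z3F F by apply: (sepP h ht hw chk_PS_sep aS bS); apply/eqP.
have La : dotF l (evt w t a) = 0 by apply/(on_pt h l ht hw aS).
have Lb : dotF l (evt w t b) = 0 by apply/(on_pt h l ht hw bS).
have Lc : dotF l (evt w t c) = 0 by apply/(on_pt h l ht hw cS).
have El : l = normF (crossF (evt w t a) (evt w t b)) by apply: G2 => //; exact: cross_dot.
case: ifP => _.
  case/hasP => m mL /(isz3P w t); rewrite !evt_cross // => Hm.
  rewrite El; apply/mapP; exists m => //; symmetry; apply: G3 => //. all: try exact: (PL_nz h ht hw mL).
move/(nzcP h ht hw); rewrite ev_dot // evt_cross // => Hd.
move: Lc; rewrite El dot_normF => /eqP; rewrite mulf_eq0 (negbTE (nk_nz D0)) /=.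
by rewrite (negbTE Hd).
Qed.

Lemma LL_inL (F : fieldType) (h : has_char0 F) (w t : F) m : t ^+ 3 = 2 -> w ^+ 2 + w + 1 = 0 ->
  m \in PL -> inL (normF (evt w t m)).
Proof.
move=> ht hw mL; split; first by apply: normF_normalized; exact: (PL_nz h ht hw mL).
have := allP chk_cnt3_ok m mL; rewrite /cnt3_pt.
have U := filter_uniq (fun a => isz (cdot m a)) chk_PS_uniq.
have Mf : forall x, x \in filter (fun a => isz (cdot m a)) PS -> x \in PS /\ isz (cdot m x).
  by move=> x; rewrite mem_filter => /andP [].
move: U Mf; case: (filter _ PS) => [|a [|b [|c [|? ?]]]] //= U Mf _.
have [aS Ha] : a \in PS /\ isz (cdot m a) by apply: Mf; rewrite !inE eqxx.
have [bS Hb] : b \in PS /\ isz (cdot m b) by apply: Mf; rewrite !inE eqxx !orbT.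
have [cS Hc] : c \in PS /\ isz (cdot m c) by apply: Mf; rewrite !inE eqxx !orbT.
move: U; rewrite !inE !negb_or => /andP [/andP [ab ac] /andP [bc _]].
exists (pt w t a), (pt w t b), (pt w t c).
split; first by split; apply: inS_pt.
split; first by split; [apply/(on_nL h ht hw mL aS) | apply/(on_nL h ht hw mL bS) | apply/(on_nL h ht hw mL cS)].
split.
- by move/(pt_inj h ht hw aS bS)/eqP; rewrite (negbTE ab).
- by move/(pt_inj h ht hw bS cS)/eqP; rewrite (negbTE bc).
- by move/(pt_inj h ht hw aS cS)/eqP; rewrite (negbTE ac).
Qed.

Lemma part1 (F : fieldType) (h : has_char0 F) (w t : F) : t ^+ 3 = 2 -> w ^+ 2 + w + 1 = 0 ->
  has_card (@inL F) 81.
Proof.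
move=> ht hw; exists (LL w t); split.
- rewrite map_inj_in_uniq ?chk_PL_uniq // => m m' mL mL'; exact: nL_inj.
- by rewrite size_map chk_PL_size.
- move=> x; split; [case/mapP => m mL ->; exact: LL_inL | exact: inL_LL].
Qed.

Lemma part2 (F : fieldType) (h : has_char0 F) (w t : F) : t ^+ 3 = 2 -> w ^+ 2 + w + 1 = 0 ->
  forall l : triple F, inL l -> has_card (fun p => inS p /\ on_line l p) 3.
Proof.
move=> ht hw l Hl; have /mapP [m mL ->] := inL_LL h ht hw Hl.
exists (map (pt w t) (filter (fun a => isz (cdot m a)) PS)); split.
- rewrite map_inj_in_uniq ?filter_uniq ?chk_PS_uniq // => a b.
  rewrite !mem_filter => /andP[_ aS] /andP[_ bS]; exact: pt_inj.
- by rewrite size_map; apply/eqP; exact: (allP chk_cnt3_ok m mL).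
- move=> x; split.
  + case/mapP => a; rewrite mem_filter => /andP [Ha aS] ->; split; first exact: inS_pt.
    exact/(on_nL h ht hw mL aS).
  + case=> /(inS_desc h ht hw) [a aS ->] /(on_nL h ht hw mL aS) Ha.
    by apply: map_f; rewrite mem_filter Ha aS.
Qed.

Lemma part3 (F : fieldType) (h : has_char0 F) (w t : F) : t ^+ 3 = 2 -> w ^+ 2 + w + 1 = 0 ->
  forall p : triple F, inS p -> has_card (fun l => inL l /\ on_line l p) 9.
Proof.
move=> ht hw p /(inS_desc h ht hw) [a aS ->].
exists (map (fun m => normF (evt w t m)) (filter (fun m => isz (cdot m a)) PL)); split.
- rewrite map_inj_in_uniq ?filter_uniq ?chk_PL_uniq // => m m'.
  rewrite !mem_filter => /andP[_ mL] /andP[_ mL']; exact: nL_inj.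
- by rewrite size_map; apply/eqP; exact: (allP chk_cnt9_ok a aS).
- move=> x; split.
  + case/mapP => m; rewrite mem_filter => /andP [Ha mL] ->; split; first exact: LL_inL.
    exact/(on_nL h ht hw mL aS).
  + case=> Lx; have /mapP [m mL ->] := inL_LL h ht hw Lx.
    move/(on_nL h ht hw mL aS) => Ha.
    by apply: map_f; rewrite mem_filter Ha mL.
Qed.

Theorem mainTheorem8 (F : closedFieldType) (charF0 : [pchar F] =i pred0) :
  [/\ has_card (@inL F) 81,
      (forall l : triple F, inL l ->
         has_card (fun p => inS p /\ on_line l p) 3)
    & (forall p : triple F, inS p ->
         has_card (fun l => inL l /\ on_line l p) 9)].
Proof.
have h : has_char0 F := charF0.
have [t ht] : exists t : F, t ^+ 3 = 2.
  have [x Hx] := @solve_monicpoly F 3%N (fun i => if i == 0%N then 2 else 0) isT.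
  by exists x; rewrite Hx !big_ord_recl big_ord0 /= !mul0r expr0 mulr1 !addr0.
have [w hw] : exists w : F, w ^+ 2 + w + 1 = 0.
  have [x Hx] := @solve_monicpoly F 2%N (fun i => -1) isT.
  exists x; rewrite Hx !big_ord_recl big_ord0 /= expr0 expr1 addr0; ring.
split; [exact: (part1 h ht hw) | exact: (part2 h ht hw) | exact: (part3 h ht hw)].
Qed.
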